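(* Let $V=(J,(V_j)_{j\in J},d,H)$ be a hypergraph system, $(\nu_e)_{e\in H}$ a pseudorandom system of measures on $V$, and for each $e\in H$ let $f_e:V_e\to\mathbb{R}$ satisfy $|f_e(x_e)|\le\nu_e(x_e)$ for all $x_e\in V_e$. For $J'\subseteq J$ define $$Q_{J'}:=\mathbb{E}\Big(\prod_{e\in H:\,J'\subseteq e}\ \prod_{\omega\in\{0,1\}^{J'}}f_e(x^{(\omega)}_e)\prod_{e\in H:\,J'\not\subseteq e}\ \prod_{\omega\in\{0,1\}^{e\cap J'}}\nu_e(x^{(\omega)}_e)\ \Big|\ x^{(0)}_J,x^{(1)}_J\in V_J,\ x^{(0)}_{J\setminus J'}=x^{(1)}_{J\setminus J'}\Big),$$ where in $x^{(\omega)}_e$ the tuple $\omega$ (defined on $J'$ or on $e\cap J'$) is extended arbitrarily to $e$ (the choice is irrelevant since $x^{(0)}_{J\setminus J'}=x^{(1)}_{J\setminus J'}$). Then for every $J'\subsetneq J$ and every $j_0\in J\setminus J'$, $$|Q_{J'}|\le(1+o_{N\to\infty}(1))\,|Q_{J'\cup\{j_0\}}|^{1/2}.$$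
   Context: A hypergraph system is a quadruple $V=(J,(V_j)_{j\in J},d,H)$ where $J$ is a finite set, each $V_j$ is a finite nonempty set, $d\ge1$ is an integer and $H\subseteq\binom{J}{d}:=\{e\subseteq J:|e|=d\}$; for $e\subseteq J$ put $V_e:=\prod_{j\in e}V_j$. For a finite nonempty set $Z$ and $f:Z\to\mathbb{R}$, $\mathbb{E}(f(x)\mid x\in Z):=|Z|^{-1}\sum_{x\in Z}f(x)$; constraints written after the bar mean uniform averaging over all tuples satisfying them. All objects depend on a parameter $N$ ranging over a sequence tending to infinity while $J,d,H$ are fixed; implicit constants may depend on $J$; $o_{N\to\infty}(1)$ is a quantity tending to $0$ as $N\to\infty$ uniformly in the $f_e$; $O_K(1)$ is a quantity bounded by a constant depending on $K$ (and $J$). Cube notation: for a finite set $e$, $\{0,1\}^e$ is the set of tuples $\omega=(\omega_j)_{j\in e}$ with $\omega_j\in\{0,1\}$, and $0^e$ is the all-zero tuple; for $x^{(0)}_J=(x^{(0)}_j)_{j\in J},x^{(1)}_J\in V_J$, $e\subseteq J$ and $\omega\in\{0,1\}^e$, set $x^{(\omega)}_e:=(x^{(\omega_j)}_j)_{j\in e}\in V_e$ and $x^{(a)}_e:=(x^{(a)}_j)_{j\in e}$ for $a\in\{0,1\}$. A system of measures is a family of functions $\nu_e:V_e\to[0,\infty)$, $e\in H$, with $\mathbb{E}(\nu_e(x_e)\mid x_e\in V_e)=1+o_{N\to\infty}(1)$. For $e\in H$ and $f:V_e\to\mathbb{R}$, $\mathcal{D}_ef(x^{(0)}_e):=\mathbb{E}\big(\prod_{\omega\in\{0,1\}^e,\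 \omega\neq 0^e}f(x^{(\omega)}_e)\mid x^{(1)}_e\in V_e\big)$. The system is pseudorandom if: (i) $\mathcal{D}_e(\nu_e+1)(x_e)=O(1)$ for all $e\in H$, $x_e\in V_e$; (ii) for every choice of exponents $n_{e,\omega}\in\{0,1\}$, $\mathbb{E}\big(\prod_{e\in H}\prod_{\omega\in\{0,1\}^e}\nu_e(x^{(\omega)}_e)^{n_{e,\omega}}\mid x^{(0)}_J,x^{(1)}_J\in V_J\big)=1+o_{N\to\infty}(1)$; (iii) for every $e\in H$, $j\in e$, every choice of $n_{e,\omega}\in\{0,1\}$ and every integer $K\ge0$, $\mathbb{E}\Big(\mathbb{E}\big(\prod_{\omega\in\{0,1\}^e}\nu_e(x^{(\omega)}_e)^{n_{e,\omega}}\mid x^{(0)}_j,x^{(1)}_j\in V_j\big)^K\ \Big|\ x^{(0)}_{e\setminus\{j\}},x^{(1)}_{e\setminus\{j\}}\in V_{e\setminus\{j\}}\Big)=O_K(1)$. *)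

(* Defs.v *)
From HB Require Import structures.
From mathcomp Require Import all_boot all_order all_algebra.
From mathcomp Require Import reals.
Set Implicit Arguments. Unset Strict Implicit. Unset Printing Implicit Defensive.
Import Order.TTheory GRing.Theory Num.Theory.
Local Open Scope ring_scope.

Section Defs.
Variable R : realType.

Definition avgP (T : finType) (P : pred T) (F : T -> R) : R :=
  (\sum_(t | P t) F t) / (#|P|%:R).

Definition avg (T : finType) (F : T -> R) : R := avgP predT F.

Variable J : finType.

Definition subJ (e : {set J}) : finType := {j : J | j \in e}.

Variable V : J -> finType.

Definition VJ : finType := {dffun forall j : J, V j}.
Definition Ve (e : {set J}) : finType := {dffun forall i : subJ e, V (val i)}.

Definition restr (e : {set J}) (x : VJ) : Ve e :=
  @finfun (subJ e) (fun i => V (val i)) (fun i => x (val i)).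

End Defs.

(* cube mixing: x^(omega) where omega is encoded by the set w of coordinates
   where omega = 1 *)
Definition mix (I : finType) (T : I -> finType)
  (x0 x1 : {dffun forall i : I, T i}) (w : {set I}) : {dffun forall i : I, T i} :=
  @finfun I T (fun i => if i \in w then x1 i else x0 i).

Section Main.
Variable R : realType.
Local Open Scope ring_scope.

Definition tends_to (u : nat -> R) (l : R) : Prop :=
  forall eps : R, 0 < eps -> exists N0 : nat, forall N : nat, (N0 <= N)%N ->
    `|u N - l| <= eps.

Variable J : finType.

Definition hypergraph_system (V : J -> finType) (d : nat) (H : {set {set J}}) : Prop :=
  [/\ (1 <= d)%N, (forall e, e \in H -> #|e| = d) & (forall j, 0 < #|V j|)%N].

Definition Dop (V : J -> finType) (e : {set J}) (F : Ve V e -> R) (y0 : Ve V e) : R :=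
  avg (fun y1 : Ve V e =>
    \prod_(w in powerset [set: subJ e] | w != set0) F (mix y0 y1 w)).

Definition system_of_measures (V : nat -> J -> finType) (H : {set {set J}})
  (nu : forall N (e : {set J}), Ve (V N) e -> R) : Prop :=
  (forall N e x, e \in H -> 0 <= nu N e x) /\
  (forall e, e \in H -> tends_to (fun N => avg (nu N e)) 1).

Definition pseudorandom (V : nat -> J -> finType) (H : {set {set J}})
  (nu : forall N (e : {set J}), Ve (V N) e -> R) : Prop :=
  system_of_measures H nu /\
  (exists C : R, forall N e (x : Ve (V N) e), e \in H ->
     Dop (fun y => nu N e y + 1) x <= C) /\
  (forall n : {set J} -> {set J} -> bool,
     tends_to (fun N => avg (fun p : VJ (V N) * VJ (V N) =>
       \prod_(e in H) \prod_(w in powerset e)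
          nu N e (restr e (mix p.1 p.2 w)) ^+ n e w)) 1) /\
  (forall (e : {set J}) (j : subJ e) (n : {set subJ e} -> bool) (K : nat),
     e \in H ->
     exists C : R, forall N,
       avg (fun y : Ve (V N) e * Ve (V N) e =>
         (avgP (fun z : Ve (V N) e * Ve (V N) e =>
                  [forall i, (i != j) ==> ((z.1 i == y.1 i) && (z.2 i == y.2 i))])
               (fun z => \prod_(w in powerset [set: subJ e])
                           nu N e (mix z.1 z.2 w) ^+ n w)) ^+ K) <= C).

Definition Q (V : J -> finType) (H : {set {set J}})
  (nu f : forall e : {set J}, Ve V e -> R) (J' : {set J}) : R :=
  avgP (fun p : VJ V * VJ V => [forall j, (j \notin J') ==> (p.1 j == p.2 j)])
    (fun p =>
      (\prod_(e in H | J' \subset e) \prod_(w in powerset J')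
          f e (restr e (mix p.1 p.2 w))) *
      (\prod_(e in H | ~~ (J' \subset e)) \prod_(w in powerset (e :&: J'))
          nu e (restr e (mix p.1 p.2 w)))).

End Main.

(* Main.v *)
Require Import Defs.
From HB Require Import structures.
From mathcomp Require Import all_boot all_order all_algebra.
From mathcomp Require Import reals.
From mathcomp Require Import ring lra.
Set Implicit Arguments. Unset Strict Implicit. Unset Printing Implicit Defensive.
Import Order.TTheory GRing.Theory Num.Theory.
Local Open Scope ring_scope.

Lemma fiber_sum (R : realType) (T U : finType) (P P2 : pred T) (c : T -> U)
  (u : U -> T -> T) (v : T -> T) (h : T -> R) :
  (forall x, P x -> P2 (v x)) -> (forall y t, P2 y -> P (u t y)) ->
  (forall y t, P2 y -> c (u t y) = t) -> (forall y t, P2 y -> v (u t y) = y) ->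
  (forall x, P x -> u (c x) (v x) = x) ->
  \sum_(x | P x) h x = \sum_t \sum_(y | P2 y) h (u t y).
Proof.
move=> H1 H2 H3 H4 H5.
rewrite (partition_big c predT) //=; apply: eq_bigr => t _.
rewrite (reindex_onto (u t) v); last first.
  by move=> x /andP[Px /eqP <-]; rewrite H5.
apply: eq_bigl => y; apply/idP/idP.
  by case/andP=> /andP[Pu _] /eqP <-; apply: H1.
by move=> P2y; rewrite H2 // H3 // H4 // !eqxx.
Qed.

Lemma card_sum (R : realType) (T : finType) (P : pred T) :
  (#|P|%:R : R) = \sum_(x | P x) 1.
Proof. by rewrite -sum1_card natr_sum. Qed.

Lemma sqrt_dist1 (R : realType) (a : R) : `|Num.sqrt a - 1| <= `|a - 1|.
Proof.
have [a0|a0] := leP 0 a; last first.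
  rewrite ltr0_sqrtr // sub0r normrN normr1 ler0_norm ?opprB; last first.
    by rewrite subr_le0 ltW // (lt_le_trans a0).
  lra.
have -> : a - 1 = (Num.sqrt a - 1) * (Num.sqrt a + 1).
  have := sqr_sqrtr a0; rewrite expr2 => h; rewrite mulrBl !mulrDr h; ring.
rewrite normrM ler_peMr // ger0_norm ?lerDr ?sqrtr_ge0 //.
by rewrite addr_ge0 ?sqrtr_ge0.
Qed.

Lemma cs_sum (R : realType) (T : finType) (P : pred T) (w a : T -> R) :
  (forall x, P x -> 0 <= w x) ->
  (\sum_(x | P x) w x * a x) ^+ 2 <=
  (\sum_(x | P x) w x) * \sum_(x | P x) w x * a x ^+ 2.
Proof.
move=> w0.
have : 0 <= \sum_(x | P x) \sum_(y | P y) w x * w y * (a x - a y) ^+ 2.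
  apply: sumr_ge0 => x Px; apply: sumr_ge0 => y Py.
  by rewrite mulr_ge0 ?sqr_ge0 // mulr_ge0 // w0.
have E : forall x y, w x * w y * (a x - a y) ^+ 2 =
   (w x * a x ^+ 2) * w y + w x * (w y * a y ^+ 2) - 2 * ((w x * a x) * (w y * a y)).
  by move=> x y; rewrite sqrrB; ring.
set A := \sum_(x | P x) w x * a x ^+ 2.
set B := \sum_(x | P x) w x.
set C := \sum_(x | P x) w x * a x.
have Inner : forall x, \sum_(y | P y) w x * w y * (a x - a y) ^+ 2 =
   (w x * a x ^+ 2) * B + w x * A - 2 * ((w x * a x) * C).
  move=> x; rewrite (eq_bigr _ (fun y _ => E x y)) big_split /= sumrN big_split /=.
  by rewrite /A /B /C !mulr_sumr.
rewrite (eq_bigr _ (fun x _ => Inner x)) big_split /= sumrN big_split /=.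
rewrite -!mulr_suml -/A -/B -/C -mulr_sumr -mulr_suml -/C.
move=> h; nra.
Qed.

Lemma prod_powerset1 (R : realType) (T : finType) (a : T) (A : {set T}) (g : {set T} -> R) :
  a \notin A ->
  \prod_(w in powerset (a |: A)) g w =
  (\prod_(w in powerset A) g w) * \prod_(w in powerset A) g (a |: w).
Proof.
move=> aA.
rewrite (bigID (fun w : {set T} => a \in w)) /= mulrC; congr (_ * _).
  apply: eq_bigl => w; rewrite !inE; apply/idP/idP.
    case/andP=> /subsetP sw aw; apply/subsetP => x xw.
    by have := sw x xw; rewrite !inE; case/orP=> // /eqP ex; rewrite -ex xw in aw.
  move=> sw; have -> : a \notin w by apply: contra aA => /(subsetP sw).
  by rewrite andbT (subset_trans sw) // subsetUr.
rewrite (reindex_onto (fun w => a |: w) (fun w => w :\ a)); last first.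
  by move=> w /andP[_ aw]; rewrite setD1K.
apply: eq_bigl => w; rewrite !inE eqxx /= andbT; apply/idP/idP.
  case/andP=> sw /eqP e; apply/subsetP => x xw.
  have xa : x != a by apply: contraTneq xw => ->; rewrite -e !inE eqxx.
  have := subsetP sw x; rewrite !inE xw orbT (negPf xa) /=; by apply.
move=> sw; have aw : a \notin w by apply/negP => aw; move/negP: aA; apply; exact: (subsetP sw).
by rewrite setUS // setU1K // eqxx.
Qed.

Lemma mixE (I : finType) (T : I -> finType) (x0 x1 : {dffun forall i : I, T i}) w i :
  mix x0 x1 w i = if i \in w then x1 i else x0 i.
Proof. by rewrite /mix ffunE. Qed.

Lemma restr_ext (J : finType) (V : J -> finType) (e : {set J}) (x y : VJ V) :
  (forall j, j \in e -> x j = y j) -> restr e x = restr e y.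
Proof. by move=> h; apply/ffunP => i; rewrite !ffunE h // (valP i). Qed.

Definition SS (J : finType) (V : J -> finType) (K : {set J}) : pred (VJ V * VJ V) :=
  fun p => [forall j, (j \notin K) ==> (p.1 j == p.2 j)].

Lemma SSP (J : finType) (V : J -> finType) (K : {set J}) (p : VJ V * VJ V) :
  reflect (forall j, j \notin K -> p.1 j = p.2 j) (SS K p).
Proof.
apply: (iffP forallP) => h j; first by move=> jK; apply/eqP; move/implyP: (h j); apply.
by apply/implyP => jK; apply/eqP; apply: h.
Qed.

Definition pj0 (J : finType) (V : J -> finType) (b : VJ V) (j0 : J) : pred (VJ V) :=
  fun x => [forall j, (j != j0) ==> (x j == b j)].

Lemma pj0P (J : finType) (V : J -> finType) (b : VJ V) (j0 : J) (x : VJ V) :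
  reflect (forall j, j != j0 -> x j = b j) (pj0 b j0 x).
Proof.
apply: (iffP forallP) => h j; first by move=> jK; apply/eqP; move/implyP: (h j); apply.
by apply/implyP => jK; apply/eqP; apply: h.
Qed.

Lemma pj0_mix (J : finType) (V : J -> finType) (b : VJ V) (j0 : J) (x : VJ V) :
  pj0 b j0 (mix b x [set j0]).
Proof. by apply/pj0P => j jj0; rewrite mixE inE (negPf jj0). Qed.

Definition pJ (J : finType) (V : J -> finType) (b : VJ V) (K : {set J}) : pred (VJ V) :=
  fun x => [forall j, (j \in K) ==> (x j == b j)].

Lemma pJP (J : finType) (V : J -> finType) (b : VJ V) (K : {set J}) (x : VJ V) :
  reflect (forall j, j \in K -> x j = b j) (pJ b K x).
Proof.
apply: (iffP forallP) => h j; first by move=> jK; apply/eqP; move/implyP: (h j); apply.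
by apply/implyP => jK; apply/eqP; apply: h.
Qed.

Lemma pJ_mix (J : finType) (V : J -> finType) (b : VJ V) (K : {set J}) (x : VJ V) :
  pJ b K (mix x b K).
Proof. by apply/pJP => j jK; rewrite mixE jK. Qed.

Definition cx (J : finType) (V : J -> finType) (b : VJ V) (j0 : J) (x : VJ V) :
  {x : VJ V | pj0 b j0 x} := exist _ (mix b x [set j0]) (pj0_mix b j0 x).

Definition cA (J : finType) (V : J -> finType) (b : VJ V) (K : {set J}) (p : VJ V * VJ V) :
  {x : VJ V | pJ b K x} := exist _ (mix p.2 b K) (pJ_mix b K p.2).

Lemma fibers (R : realType) (J : finType) (V : J -> finType) (J' : {set J}) (j0 : J)
  (b : VJ V) (h : VJ V * VJ V -> R) (h2 : VJ V * VJ V -> R) (h3 : VJ V * VJ V -> R) :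
  j0 \notin J' ->
  [/\ \sum_(p | SS J' p) h p =
      \sum_(t : {x : VJ V | pj0 b j0 x})
        \sum_(y | SS J' y && (y.1 j0 == b j0)) h (mix y.1 (val t) [set j0], mix y.2 (val t) [set j0]),
      \sum_(p | SS (j0 |: J') p) h2 p =
      \sum_(t : {x : VJ V | pj0 b j0 x} * {x : VJ V | pj0 b j0 x})
        \sum_(y | SS J' y && (y.1 j0 == b j0)) h2 (mix y.1 (val t.1) [set j0], mix y.2 (val t.2) [set j0])
    & \sum_(p : VJ V * VJ V) h3 p =
      \sum_(t : {x : VJ V | pJ b J' x}) \sum_(y | SS J' y) h3 (y.1, mix (val t) y.2 J')].
Proof.
move=> j0J; split.
- apply: (fiber_sum (c := fun p => cx b j0 p.1) (v := fun p => (mix p.1 b [set j0], mix p.2 b [set j0]))).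
  + move=> x /SSP Sx; apply/andP; split; last by rewrite /= mixE inE eqxx.
    apply/SSP => j jJ /=; rewrite !mixE inE; case: eqP => // _; exact: Sx.
  + move=> y t /andP[/SSP Sy _]; apply/SSP => j jJ /=; rewrite !mixE inE; case: eqP => // _; exact: Sy.
  + move=> y t _; apply: val_inj; apply/ffunP => j /=; rewrite !mixE !inE.
    case: eqP => [->|/eqP jj0] //; by rewrite (pj0P _ _ _ (valP t) j jj0).
  + move=> [y1 y2] t /andP[/SSP Sy /eqP /= e1]; move: Sy => /= Sy; congr pair; apply/ffunP => j; rewrite !mixE !inE;
      case: eqP => [->|] //=; rewrite -e1 ?Sy //.
  + move=> x /SSP Sx; case: x Sx => x1 x2 Sx /=; congr pair; apply/ffunP => j; rewrite !mixE !inE;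
      case: eqP => [->|] //=; rewrite ?mixE ?inE ?eqxx //; by rewrite Sx.
- apply: (fiber_sum (c := fun p => (cx b j0 p.1, cx b j0 p.2)) (v := fun p => (mix p.1 b [set j0], mix p.2 b [set j0]))).
  + move=> x /SSP Sx; apply/andP; split; last by rewrite /= mixE inE eqxx.
    apply/SSP => j jJ /=; rewrite !mixE inE; case: eqP => // /eqP jj0; apply: Sx.
    by rewrite !inE (negPf jj0).
  + move=> y t /andP[/SSP Sy _]; apply/SSP => j; rewrite !inE negb_or => /andP[jj0 jJ] /=.
    by rewrite !mixE inE (negPf jj0) Sy.
  + move=> y [t s] _; congr pair; apply: val_inj; apply/ffunP => j /=; rewrite !mixE !inE;
    case: eqP => [->|/eqP jj0] //.
      by rewrite (pj0P _ _ _ (valP t) j jj0).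
    by rewrite (pj0P _ _ _ (valP s) j jj0).
  + move=> [y1 y2] t /andP[/SSP Sy /eqP /= e1]; move: Sy => /= Sy; congr pair; apply/ffunP => j; rewrite !mixE !inE;
      case: eqP => [->|] //=; rewrite -e1 ?Sy //.
  + move=> x _; case: x => x1 x2 /=; congr pair; apply/ffunP => j; rewrite !mixE !inE;
      case: eqP => [->|] //=; rewrite ?mixE ?inE ?eqxx //.
- apply: (fiber_sum (P := predT) (c := cA b J') (v := fun p => (p.1, mix p.1 p.2 J'))) => //.
  + move=> x _; apply/SSP => j jJ /=; by rewrite mixE (negPf jJ).
  + move=> y t _; apply: val_inj; apply/ffunP => j /=; rewrite !mixE.
    have [jJ|jJ] := boolP (j \in J') => //.
    by rewrite (pJP _ _ _ (valP t) j jJ).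
  + move=> y t /SSP Sy /=; case: y Sy => y1 y2 Sy /=; congr pair; apply/ffunP => j; rewrite !mixE.
    have [jJ|jJ] := boolP (j \in J') => //.
    by rewrite Sy.
  + move=> x _; case: x => x1 x2 /=; congr pair; apply/ffunP => j; rewrite !mixE.
    by case: (j \in J').
Qed.


Definition Qint (R : realType) (J : finType) (V : J -> finType) (H : {set {set J}})
  (nu f : forall e : {set J}, Ve V e -> R) (J' : {set J}) (p : VJ V * VJ V) : R :=
  (\prod_(e in H | J' \subset e) \prod_(w in powerset J') f e (restr e (mix p.1 p.2 w))) *
  (\prod_(e in H | ~~ (J' \subset e)) \prod_(w in powerset (e :&: J')) nu e (restr e (mix p.1 p.2 w))).

Definition Gq (R : realType) (J : finType) (V : J -> finType) (H : {set {set J}})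
  (nu : forall e : {set J}, Ve V e -> R) (J' : {set J}) (j0 : J) (p : VJ V * VJ V) : R :=
  \prod_(e in H | j0 \notin e) \prod_(w in powerset (e :&: J')) nu e (restr e (mix p.1 p.2 w)).

Definition GF (R : realType) (J : finType) (V : J -> finType) (H : {set {set J}})
  (nu f : forall e : {set J}, Ve V e -> R) (J' : {set J}) (j0 : J) (b : bool) (p : VJ V * VJ V) : R :=
  (\prod_(e in H | (J' \subset e) && ((j0 \in e) == b)) \prod_(w in powerset J') f e (restr e (mix p.1 p.2 w))) *
  (\prod_(e in H | ~~ (J' \subset e) && ((j0 \in e) == b)) \prod_(w in powerset (e :&: J')) nu e (restr e (mix p.1 p.2 w))).

Lemma Qint_split (R : realType) (J : finType) (V : J -> finType) (H : {set {set J}})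
  (nu f : forall e : {set J}, Ve V e -> R) (J' : {set J}) (j0 : J) p :
  Qint H nu f J' p = GF H nu f J' j0 false p * GF H nu f J' j0 true p.
Proof.
rewrite /Qint /GF.
rewrite (bigID (fun e : {set J} => j0 \in e) (fun e => (e \in H) && (J' \subset e))).
rewrite [X in _ * X](bigID (fun e : {set J} => j0 \in e)) /=.
set a1 := \prod_(i | _) _; set a2 := \prod_(i | _) _; set a3 := \prod_(i | _) _; set a4 := \prod_(i | _) _.
set b1 := \prod_(i | _) _; set b2 := \prod_(i | _) _; set b3 := \prod_(i | _) _; set b4 := \prod_(i | _) _.
have -> : b1 = a2 by apply: eq_bigl => e; rewrite andbA eqbF_neg.
have -> : b2 = a4 by apply: eq_bigl => e; rewrite andbA eqbF_neg.
have -> : b3 = a1 by apply: eq_bigl => e; rewrite andbA eqb_id.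
have -> : b4 = a3 by apply: eq_bigl => e; rewrite andbA eqb_id.
ring.
Qed.

Lemma Gq_ge0 (R : realType) (J : finType) (V : J -> finType) (H : {set {set J}})
  (nu : forall e : {set J}, Ve V e -> R) (J' : {set J}) (j0 : J) p :
  (forall e x, e \in H -> 0 <= nu e x) -> 0 <= Gq H nu J' j0 p.
Proof.
move=> nu0; apply: prodr_ge0 => e /andP[eH _]; apply: prodr_ge0 => w _; exact: nu0.
Qed.

Lemma GF_le (R : realType) (J : finType) (V : J -> finType) (H : {set {set J}})
  (nu f : forall e : {set J}, Ve V e -> R) (J' : {set J}) (j0 : J) p :
  (forall e x, e \in H -> 0 <= nu e x) ->
  (forall e, e \in H -> forall x, `|f e x| <= nu e x) ->
  `|GF H nu f J' j0 false p| <= Gq H nu J' j0 p.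
Proof.
move=> nu0 fnu; rewrite /GF /Gq.
rewrite [X in _ <= X](bigID (fun e : {set J} => J' \subset e)) /= normrM.
apply: ler_pM; rewrite ?normr_ge0 //.
  rewrite normr_prod (eq_bigl (fun e => ((e \in H) && (j0 \notin e)) && (J' \subset e))); last first.
    by move=> e; case: (e \in H); case: (J' \subset e); case: (j0 \in e).
  apply: ler_prod => e /andP[/andP[eH _] sJe]; rewrite normr_ge0 /=.
  rewrite normr_prod (setIidPr sJe); apply: ler_prod => w _.
  by rewrite normr_ge0 fnu.
rewrite normr_prod (eq_bigl (fun e => ((e \in H) && (j0 \notin e)) && ~~ (J' \subset e))); last first.
  by move=> e; case: (e \in H); case: (J' \subset e); case: (j0 \in e).
apply: ler_prod => e /andP[/andP[eH _] sJe]; rewrite normr_ge0 /=.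
rewrite normr_prod; apply: ler_prod => w _.
by rewrite normr_ge0 /= ger0_norm // nu0.
Qed.

Lemma restr_mix_ext (J : finType) (V : J -> finType) (e w : {set J}) (j0 : J) (p q : VJ V * VJ V) :
  j0 \notin e -> (forall j, j != j0 -> p.1 j = q.1 j /\ p.2 j = q.2 j) ->
  restr e (mix p.1 p.2 w) = restr e (mix q.1 q.2 w).
Proof.
move=> j0e h; apply: restr_ext => j je; rewrite !mixE.
have jj0 : j != j0 by apply: contraNneq j0e => <-.
by case: (h j jj0) => -> ->.
Qed.

Lemma GF_ext (R : realType) (J : finType) (V : J -> finType) (H : {set {set J}})
  (nu f : forall e : {set J}, Ve V e -> R) (J' : {set J}) (j0 : J) (p q : VJ V * VJ V) :
  (forall j, j != j0 -> p.1 j = q.1 j /\ p.2 j = q.2 j) ->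
  GF H nu f J' j0 false p = GF H nu f J' j0 false q /\ Gq H nu J' j0 p = Gq H nu J' j0 q.
Proof.
move=> h; split; last first.
  apply: eq_bigr => e /andP[_ j0e]; apply: eq_bigr => w _.
  by rewrite (restr_mix_ext w j0e h).
rewrite /GF; congr (_ * _).
  apply: eq_bigr => e /andP[_ /andP[_ j0e]]; apply: eq_bigr => w _.
  by rewrite eqbF_neg in j0e; rewrite (restr_mix_ext w j0e h).
apply: eq_bigr => e /andP[_ /andP[_ j0e]]; apply: eq_bigr => w _.
by rewrite eqbF_neg in j0e; rewrite (restr_mix_ext w j0e h).
Qed.

Lemma Gq_extA (R : realType) (J : finType) (V : J -> finType) (H : {set {set J}})
  (nu : forall e : {set J}, Ve V e -> R) (J' : {set J}) (j0 : J) (y : VJ V * VJ V) (t : VJ V) :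
  Gq H nu J' j0 (y.1, mix t y.2 J') = Gq H nu J' j0 y.
Proof.
apply: eq_bigr => e _; apply: eq_bigr => w; rewrite inE => /subsetP sw.
apply: f_equal; apply: restr_ext => j je; rewrite !mixE /=.
case: ifP => // jw; have := sw j jw; rewrite inE => /andP[_ ->] //.
Qed.

Lemma mixM1 (J : finType) (V : J -> finType) (j0 : J) (y1 y2 t s : VJ V) (w : {set J}) :
  j0 \notin w ->
  mix (mix y1 t [set j0]) (mix y2 s [set j0]) w = mix (mix y1 t [set j0]) (mix y2 t [set j0]) w.
Proof.
move=> j0w; apply/ffunP => j; rewrite !mixE !inE.
case: eqP => [->|]; first by rewrite (negPf j0w).
by [].
Qed.

Lemma mixM2 (J : finType) (V : J -> finType) (j0 : J) (y1 y2 t s : VJ V) (w : {set J}) :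
  j0 \notin w ->
  mix (mix y1 t [set j0]) (mix y2 s [set j0]) (j0 |: w) = mix (mix y1 s [set j0]) (mix y2 s [set j0]) w.
Proof.
move=> j0w; apply/ffunP => j; rewrite !mixE !inE.
case: eqP => [->|] /=; first by rewrite (negPf j0w).
by [].
Qed.

Lemma Qint_pair (R : realType) (J : finType) (V : J -> finType) (H : {set {set J}})
  (nu f : forall e : {set J}, Ve V e -> R) (J' : {set J}) (j0 : J) (y : VJ V * VJ V) (t s : VJ V) :
  j0 \notin J' ->
  Qint H nu f (j0 |: J') (mix y.1 t [set j0], mix y.2 s [set j0]) =
  Gq H nu J' j0 y * (GF H nu f J' j0 true (mix y.1 t [set j0], mix y.2 t [set j0]) *
                    GF H nu f J' j0 true (mix y.1 s [set j0], mix y.2 s [set j0])).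
Proof.
move=> j0J; rewrite /Qint /GF /=.
set Xt := \prod_(e in H | _) \prod_(w in powerset J') f e (restr e (mix (mix y.1 t [set j0]) _ w)).
set Xs := \prod_(e in H | _) \prod_(w in powerset J') f e (restr e (mix (mix y.1 s [set j0]) _ w)).
set Yt := \prod_(e in H | _) \prod_(w in powerset (e :&: J')) nu e (restr e (mix (mix y.1 t [set j0]) _ w)).
set Ys := \prod_(e in H | _) \prod_(w in powerset (e :&: J')) nu e (restr e (mix (mix y.1 s [set j0]) _ w)).
have E1 : \prod_(e in H | (j0 |: J') \subset e) \prod_(w in powerset (j0 |: J'))
    f e (restr e (mix (mix y.1 t [set j0]) (mix y.2 s [set j0]) w)) = Xt * Xs.
  rewrite /Xt /Xs -big_split /=.
  rewrite (eq_bigl (fun e => (e \in H) && ((J' \subset e) && ((j0 \in e) == true)))); last first.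
    by move=> e; rewrite subUset sub1set; case: (e \in H); case: (J' \subset e); case: (j0 \in e).
  apply: eq_bigr => e _; rewrite prod_powerset1 //; congr (_ * _).
    apply: eq_bigr => w; rewrite inE => sw; rewrite mixM1 //.
    by apply: contra j0J => /(subsetP sw).
  apply: eq_bigr => w; rewrite inE => sw; rewrite mixM2 //.
  by apply: contra j0J => /(subsetP sw).
have E2 : \prod_(e in H | ~~ ((j0 |: J') \subset e)) \prod_(w in powerset (e :&: (j0 |: J')))
    nu e (restr e (mix (mix y.1 t [set j0]) (mix y.2 s [set j0]) w)) = (Yt * Ys) * Gq H nu J' j0 y.
  rewrite (bigID (fun e : {set J} => j0 \in e)) /=; congr (_ * _).
    rewrite /Yt /Ys -big_split /=.
    rewrite (eq_bigl (fun e => (e \in H) && (~~ (J' \subset e) && ((j0 \in e) == true)))); last first.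
      by move=> e; rewrite subUset sub1set eqb_id; case: (e \in H); case: (J' \subset e); case: (j0 \in e).
    apply: eq_bigr => e /andP[_ /andP[_ j0e]]; rewrite eqb_id in j0e.
    have -> : e :&: (j0 |: J') = j0 |: (e :&: J').
      by rewrite setIUr (setIidPr _) // sub1set.
    have j0eJ : j0 \notin e :&: J' by rewrite inE (negPf j0J) andbF.
    rewrite prod_powerset1 //; congr (_ * _).
      apply: eq_bigr => w; rewrite inE => sw; rewrite mixM1 //.
      by apply: contra j0eJ => /(subsetP sw).
    apply: eq_bigr => w; rewrite inE => sw; rewrite mixM2 //.
    by apply: contra j0eJ => /(subsetP sw).
  rewrite /Gq [LHS](eq_bigl (fun e => (e \in H) && (j0 \notin e))); last first.
    by move=> e; rewrite subUset sub1set; case: (e \in H); case: (J' \subset e); case: (j0 \in e).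
  apply: eq_bigr => e /andP[_ j0e].
  have -> : e :&: (j0 |: J') = e :&: J'.
    rewrite setIUr; have -> : e :&: [set j0] = set0; last by rewrite set0U.
    by apply/setP => j; rewrite !inE; apply/negbTE; apply: contra j0e => /andP[je /eqP <-].
  apply: eq_bigr => w _; congr (nu e _); apply: (@restr_mix_ext _ _ e w j0 (mix y.1 t [set j0], mix y.2 s [set j0])) => //= j jj0.
  by rewrite !mixE !inE (negPf jj0).
rewrite E1 E2; ring.
Qed.

Lemma ii_Gq (R : realType) (J : finType) (V : J -> finType) (H : {set {set J}})
  (nu : forall e : {set J}, Ve V e -> R) (J' : {set J}) (j0 : J) (p : VJ V * VJ V) :
  \prod_(e in H) \prod_(w in powerset e) nu e (restr e (mix p.1 p.2 w)) ^+ ((w \subset J') && (j0 \notin e))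
  = Gq H nu J' j0 p.
Proof.
rewrite (bigID (fun e : {set J} => j0 \notin e)) /= [X in _ * X]big1 ?mulr1; last first.
  by move=> e /andP[_ /negPf ->]; apply: big1 => w _; rewrite andbF expr0.
apply: eq_bigr => e /andP[_ ->].
rewrite [RHS](eq_bigl (fun w => (w \in powerset e) && (w \subset J'))); last first.
  by move=> w; rewrite powersetI !inE.
rewrite [RHS]big_mkcondr /=; apply: eq_bigr => w _; rewrite andbT.
by case: (w \subset J'); rewrite ?expr1 ?expr0.
Qed.

Lemma sumS (R : realType) (T U : finType) (P : pred T) (F : T -> R) :
  \sum_(t : U) \sum_(y | P y) F y = #|{: U}|%:R * \sum_(y | P y) F y.
Proof. by rewrite sumr_const mulr_natl. Qed.

Lemma keyN (R : realType) (J : finType) (V : J -> finType) (H : {set {set J}})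
  (nu f : forall e : {set J}, Ve V e -> R) (J' : {set J}) (j0 : J) :
  (forall j, 0 < #|V j|)%N ->
  (forall e x, e \in H -> 0 <= nu e x) ->
  (forall e, e \in H -> forall x, `|f e x| <= nu e x) ->
  j0 \notin J' ->
  `|Q H nu f J'| <=
   Num.sqrt (avg (fun p : VJ V * VJ V => \prod_(e in H) \prod_(w in powerset e)
       nu e (restr e (mix p.1 p.2 w)) ^+ ((w \subset J') && (j0 \notin e)))) *
   Num.sqrt `|Q H nu f (j0 |: J')|.
Proof.
move=> Vne nu0 fnu j0J.
have hb : forall j, exists x : V j, true.
  by move=> j; case/card_gt0P: (Vne j) => x _; exists x.
pose b : VJ V := @finfun J V (fun j => xchoose (hb j)).
pose S0 := fun y : VJ V * VJ V => SS J' y && (y.1 j0 == b j0).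
pose A := fun y : VJ V * VJ V => \sum_(t : {x : VJ V | pj0 b j0 x})
   GF H nu f J' j0 true (mix y.1 (val t) [set j0], mix y.2 (val t) [set j0]).
pose n : R := #|{: {x : VJ V | pj0 b j0 x}}|%:R.
pose k : R := #|{: {x : VJ V | pJ b J' x}}|%:R.
pose m : R := \sum_(y | S0 y) 1.
pose X := \sum_(y | S0 y) GF H nu f J' j0 false y * A y.
pose Y := \sum_(y | S0 y) Gq H nu J' j0 y.
pose Z := \sum_(y | S0 y) Gq H nu J' j0 y * A y ^+ 2.
have n0 : n != 0.
  rewrite pnatr_eq0 -lt0n; apply/card_gt0P.
  by exists (exist _ b (introT (pj0P b j0 b) (fun _ _ => erefl))).
have k0 : k != 0.
  rewrite pnatr_eq0 -lt0n; apply/card_gt0P.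
  by exists (exist _ b (introT (pJP b J' b) (fun _ _ => erefl))).
have invG : forall (y : VJ V * VJ V) (t s : VJ V),
    GF H nu f J' j0 false (mix y.1 t [set j0], mix y.2 s [set j0]) = GF H nu f J' j0 false y /\
    Gq H nu J' j0 (mix y.1 t [set j0], mix y.2 s [set j0]) = Gq H nu J' j0 y.
  by move=> y t s; apply: GF_ext => j jj0 /=; rewrite !mixE !inE (negPf jj0).
have QE : forall K : {set J}, Q H nu f K = (\sum_(p | SS K p) Qint H nu f K p) / (\sum_(p : VJ V * VJ V | SS K p) 1).
  by move=> K; rewrite /Q /avgP; congr (_ / _); apply: (card_sum _ (SS K)).
have QJ : Q H nu f J' = X / (n * m).
  rewrite QE.
  have [F1 _ _] := @fibers R J V J' j0 b (Qint H nu f J') (Qint H nu f J') (Qint H nu f J') j0J.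
  have [F2 _ _] := @fibers R J V J' j0 b (fun=> 1) (fun=> 1) (fun=> 1) j0J.
  rewrite F1 F2 sumS -/m; congr (_ / _).
  under eq_bigr do under eq_bigr do rewrite (@Qint_split R J V H nu f J' j0) (proj1 (invG _ _ _)).
  rewrite exchange_big /X; apply: eq_bigr => y _; rewrite /A mulr_sumr //.
have QJ1 : Q H nu f (j0 |: J') = Z / (n ^+ 2 * m).
  rewrite QE.
  have [_ F1 _] := @fibers R J V J' j0 b (Qint H nu f J') (Qint H nu f (j0 |: J')) (Qint H nu f J') j0J.
  have [_ F2 _] := @fibers R J V J' j0 b (fun=> 1) (fun=> 1) (fun=> 1) j0J.
  rewrite F1 F2 sumS -/m card_prod natrM -expr2; congr (_ / _).
  under eq_bigr do under eq_bigr do rewrite Qint_pair //.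
  rewrite -(pair_bigA _ (fun t s : {x : VJ V | pj0 b j0 x} => \sum_(y | S0 y) Gq H nu J' j0 y *
      (GF H nu f J' j0 true (mix y.1 (val t) [set j0], mix y.2 (val t) [set j0]) *
       GF H nu f J' j0 true (mix y.1 (val s) [set j0], mix y.2 (val s) [set j0])))) /=.
  under eq_bigr do rewrite exchange_big.
  rewrite exchange_big /Z; apply: eq_bigr => y _.
  rewrite expr2 /A mulr_suml mulr_sumr; apply: eq_bigr => t _.
  rewrite [in RHS]mulr_sumr [in RHS]mulr_sumr; apply: eq_bigr => s _.
  ring.
have AV : avg (fun p : VJ V * VJ V => \prod_(e in H) \prod_(w in powerset e)
       nu e (restr e (mix p.1 p.2 w)) ^+ ((w \subset J') && (j0 \notin e))) = Y / m.
  rewrite /avg /avgP.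
  have -> : (#|predT : pred (VJ V * VJ V)|%:R : R) = \sum_(p : VJ V * VJ V) 1.
    by rewrite (card_sum _ predT).
  under eq_bigr do rewrite ii_Gq.
  have [_ _ F3] := @fibers R J V J' j0 b (Qint H nu f J') (Qint H nu f J') (Gq H nu J' j0) j0J.
  have [_ _ F4] := @fibers R J V J' j0 b (fun=> 1) (fun=> 1) (fun=> 1) j0J.
  have [F5 _ _] := @fibers R J V J' j0 b (Gq H nu J' j0) (fun=> 1) (fun=> 1) j0J.
  have [F6 _ _] := @fibers R J V J' j0 b (fun=> 1) (fun=> 1) (fun=> 1) j0J.
  rewrite F3 F4.
  under eq_bigr do under eq_bigr do rewrite Gq_extA.
  rewrite !sumS F5 F6.
  under eq_bigr do under eq_bigr do rewrite (proj2 (invG _ _ _)).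
  rewrite !sumS -/Y -/m -/n -/k.
  have [m0|m0] := eqVneq m 0; first by rewrite m0 !mulr0 invr0 !mulr0.
  by field; rewrite k0 n0 m0.
rewrite AV QJ QJ1.
have Y0 : 0 <= Y by apply: sumr_ge0 => y _; apply: Gq_ge0.
have Z0 : 0 <= Z by apply: sumr_ge0 => y _; rewrite mulr_ge0 ?sqr_ge0 ?Gq_ge0.
have m0' : 0 <= m by apply: sumr_ge0 => y _.
have n0' : 0 < n by rewrite lt0r n0 ler0n.
pose W := \sum_(y | S0 y) Gq H nu J' j0 y * `|A y|.
have XW : `|X| <= W.
  apply: le_trans (ler_norm_sum _ _ _) _; apply: ler_sum => y _.
  by rewrite normrM ler_wpM2r ?normr_ge0 ?GF_le.
have W2 : W ^+ 2 <= Y * Z.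
  have hw : forall y, S0 y -> 0 <= Gq H nu J' j0 y by move=> y _; apply: Gq_ge0.
  apply: le_trans (@cs_sum R _ S0 (Gq H nu J' j0) (fun y => `|A y|) hw) _.
  rewrite -/Y /Z; apply: ler_wpM2l => //; rewrite le_eqVlt; apply/orP; left; apply/eqP.
  by apply: eq_bigr => y _; rewrite real_normK ?num_real.
have W0 : 0 <= `|X| by rewrite normr_ge0.
rewrite normrM normfV (ger0_norm (mulr_ge0 (ltW n0') m0')).
rewrite (ger0_norm (divr_ge0 Z0 (mulr_ge0 (exprn_ge0 2 (ltW n0')) m0'))).
set q := `|X| / (n * m).
set s := Num.sqrt (Y / m) * Num.sqrt (Z / (n ^+ 2 * m)).
have s0 : 0 <= s by rewrite mulr_ge0 ?sqrtr_ge0.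
have q0 : 0 <= q by rewrite divr_ge0 ?mulr_ge0 // ltW.
have s2 : s ^+ 2 = (Y * Z) * ((n * m)^-1) ^+ 2.
  rewrite /s exprMn !sqr_sqrtr ?divr_ge0 ?mulr_ge0 ?exprn_ge0 // ?ltW //.
  have [m0|m0] := eqVneq m 0; first by rewrite m0 !mulr0 !invr0 !mulr0 expr0n mulr0.
  by field; rewrite n0 m0.
have q2 : q ^+ 2 <= s ^+ 2.
  rewrite s2 /q exprMn; apply: ler_wpM2r; first by rewrite exprn_ge0 // invr_ge0 mulr_ge0 // ltW.
  apply: le_trans W2; nra.
nra.
Qed.

Theorem mainTheorem9 (R : realType) (J : finType) (V : nat -> J -> finType)
  (d : nat) (H : {set {set J}})
  (nu : forall (N : nat) (e : {set J}), Ve (V N) e -> R) :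
  (forall N, hypergraph_system (V N) d H) ->
  pseudorandom H nu ->
  forall (J' : {set J}) (j0 : J), J' \proper [set: J] -> j0 \notin J' ->
  exists c : nat -> R, tends_to c 0 /\
    forall (N : nat) (f : forall e : {set J}, Ve (V N) e -> R),
      (forall e, e \in H -> forall x : Ve (V N) e, `|f e x| <= nu N e x) ->
      `|Q H (nu N) f J'| <= (1 + c N) * Num.sqrt `|Q H (nu N) f (j0 |: J')|.
Proof.
move=> hs [[nu0 _] [_ [ii _]]] J' j0 _ j0J.
pose a N := avg (fun p : VJ (V N) * VJ (V N) => \prod_(e in H) \prod_(w in powerset e)
   nu N e (restr e (mix p.1 p.2 w)) ^+ ((w \subset J') && (j0 \notin e))).
exists (fun N => Num.sqrt (a N) - 1); split.
  move=> eps e0; have [N0 hN] := ii (fun e w => (w \subset J') && (j0 \notin e)) eps e0.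
  exists N0 => N NN; rewrite subr0; exact: le_trans (sqrt_dist1 _) (hN N NN).
move=> N f hf; rewrite addrC subrK; apply: keyN => //.
- by case: (hs N).
- by move=> e x eH; apply: nu0.
Qed.
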